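(* Let $\Lambda$ be a finite connected graph with $N$ sites, $\mathcal{H}=\bigotimes_{x\in\Lambda}\mathfrak{h}_x$ with each $\mathfrak{h}_x$ a copy of a finite-dimensional Hilbert space $\mathfrak{h}$, $\mathfrak{h}^s\subset\mathfrak{h}$ a subspace, and $\mathrm{Sym}^N(\mathfrak{h}^s)\subset\mathcal{H}$ the totally symmetric subspace of $\bigotimes_{x}\mathfrak{h}^s_x$. If a linear operator $\hat{H}$ on $\mathcal{H}$ leaves $\mathrm{Sym}^N(\mathfrak{h}^s)$ invariant, then $\hat{H}=\hat{H}_A+\hat{H}_Z$, where $\hat{H}_Z$ is totally symmetric (i.e. $\hat{\sigma}\hat{H}_Z\hat{\sigma}^{-1}=\hat{H}_Z$ for all site permutations $\sigma\in\mathfrak{S}_N$), $\hat{H}_A$ annihilates $\mathrm{Sym}^N(\mathfrak{h}^s)$, and $\hat{H}_A$ can be written as $$\hat{H}_A=\sum_{x\in\Lambda}\hat{h}^{(1)}_{[x]}\hat{P}_x+\sum_{\langle x,y\rangle}\hat{h}^{(2)}_{[xy]}\hat{P}_{xy},$$ where the second sum runs over nearest-neighbour pairs, each $\hat{P}_x$ (resp. $\hat{P}_{xy}$) is an orthogonal projector acting non-trivially only on site $x$ (resp. on sites $x,y$) and annihilating $\mathrm{Sym}^N(\mathfrak{h}^s)$, and $\hat{h}^{(1)}_{[x]},\hat{h}^{(2)}_{[xy]}$ are some (not necessarily local) operators on $\mathcal{H}$. In particular, vectors of $\mathrm{Sym}^N(\mathfrak{h}^s)$ that are eigenvectors of $\hat{H}_Z$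 are eigenvectors of $\hat{H}$ with the same eigenvalues.
   Context: For $\sigma\in\mathfrak{S}_N$, $\hat{\sigma}$ is the operator on $\mathcal{H}$ permuting the tensor factors: $\hat{\sigma}\bigotimes_x|e_x\rangle_x=\bigotimes_x|e_{\sigma(x)}\rangle_x$. $\mathrm{Sym}^N(\mathfrak{h}^s)=\{v\in\bigotimes_x\mathfrak{h}^s_x:\hat{\sigma}v=v\ \forall\sigma\}$. An operator annihilates a subspace if it maps all its vectors to $0$. *)

(* Defs.v *)
From HB Require Import structures.
From mathcomp Require Import all_boot all_order all_fingroup all_algebra.
Set Implicit Arguments. Unset Strict Implicit. Unset Printing Implicit Defensive.
Import Order.TTheory GRing.Theory Num.Theory.
Local Open Scope ring_scope.

(* The single-site Hilbert space h is C^d (row vectors 'rV[C]_d, standard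
   basis e_0..e_{d-1}); sites are 'I_N.  The many-body space
   H = (x)_{x in 'I_N} h_x has orthonormal basis e_c := (x)_x e_{c x}
   indexed by configurations c : 'I_N -> 'I_d.  Vectors of H are
   coefficient functions cfg -> C, operators are kernels cfg -> cfg -> C
   (matrix entries <e_c, A e_c'>). *)

Definition cfg (N d : nat) := {ffun 'I_N -> 'I_d}.
Definition vec (C : numClosedFieldType) N d := cfg N d -> C.
Definition op (C : numClosedFieldType) N d := cfg N d -> cfg N d -> C.

Section Ops.
Variables (C : numClosedFieldType) (N d : nat).

Definition opapp (A : op C N d) (v : vec C N d) : vec C N d :=
  fun c => \sum_(c' : cfg N d) A c c' * v c'.
Definition opmul (A B : op C N d) : op C N d :=
  fun c c'' => \sum_(c' : cfg N d) A c c' * B c' c''.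
Definition opadd (A B : op C N d) : op C N d := fun c c' => A c c' + B c c'.
Definition opadj (A : op C N d) : op C N d := fun c c' => (A c' c)^*.

Definition permop (s : 'S_N) : op C N d :=
  fun c c' => (c == [ffun x => c' (s x)])%:R.

(* (x)_x h^s_x, h^s = row space of S : span of product vectors
   (x)_x u_x with every u_x in h^s *)
Definition in_tensor k (S : 'M[C]_(k, d)) (v : vec C N d) : Prop :=
  exists m (u : 'I_m -> 'I_N -> 'rV[C]_d),
    (forall i x, (u i x <= S)%MS) /\
    v = fun c => \sum_(i < m) \prod_(x : 'I_N) u i x 0 (c x).

Definition in_sym k (S : 'M[C]_(k, d)) (v : vec C N d) : Prop :=
  in_tensor S v /\ forall s : 'S_N, opapp (permop s) v = v.

Definition annihilates k (S : 'M[C]_(k, d)) (A : op C N d) : Prop :=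
  forall v, in_sym S v -> opapp A v = (fun _ => 0).

Definition orth_proj (P : op C N d) : Prop := opmul P P = P /\ opadj P = P.

(* A acts non-trivially only on the sites in X : A = A_X (x) 1_{complement} *)
Definition acts_only_on (X : {set 'I_N}) (A : op C N d) : Prop :=
  exists f : op C N d,
    (forall c c', A c c' =
       if [forall z, (z \notin X) ==> (c z == c' z)] then f c c' else 0) /\
    (forall c1 c1' c2 c2' : cfg N d,
       (forall z, z \in X -> c1 z = c2 z /\ c1' z = c2' z) ->
       f c1 c1' = f c2 c2').
End Ops.

Definition connected_graph N (e : rel 'I_N) : Prop :=
  symmetric e /\ irreflexive e /\ forall x y, connect e x y.

(* Main.v *)
Require Import Defs.
From HB Require Import structures.
From mathcomp Require Import all_boot all_order all_fingroup all_algebra.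
From mathcomp Require Import sesquilinear spectral.
From mathcomp Require Import ring.
From Stdlib Require Import FunctionalExtensionality.
Import Order.TTheory GRing.Theory Num.Theory.
Set Implicit Arguments. Unset Strict Implicit. Unset Printing Implicit Defensive.
Local Open Scope ring_scope.

Section Proj.
Variables (C : numClosedFieldType) (k d : nat) (S : 'M[C]_(k, d)).
Local Open Scope sesquilinear_scope.
Let B := schmidt (row_base S).
Definition Qp : 'M[C]_d := B^t* *m B.
Lemma B_unit : B \is unitarymx.
Proof. by apply: schmidt_unitarymx; apply: rank_leq_col. Qed.
Lemma BS : (B :=: S)%MS.
Proof. rewrite /B; apply: eqmx_trans (eq_row_base S); apply: eqmx_schmidt_free; exact: row_base_free. Qed.
Lemma Qp_idem : Qp *m Qp = Qp.
Proof. by rewrite /Qp mulmxA -(mulmxA _ B) (unitarymxP B_unit) mulmx1. Qed.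
Lemma Qp_herm i j : (Qp i j)^* = Qp j i.
Proof.
rewrite /Qp !mxE rmorph_sum; apply: eq_bigr => l _.
by rewrite !mxE rmorphM /= conjCK mulrC.
Qed.
Lemma Qp_row i : (row i Qp <= S)%MS.
Proof. by rewrite -BS; apply: submx_trans (row_sub _ _) _; apply: submxMl. Qed.
Lemma Qp_id (u : 'rV[C]_d) : (u <= S)%MS -> u *m Qp = u.
Proof.
rewrite -BS => /submxP [w ->]; by rewrite /Qp mulmxA -(mulmxA w) (unitarymxP B_unit) mulmx1.
Qed.
End Proj.

Section OpAlg.
Variables (C : numClosedFieldType) (N d : nat).
Local Notation op := (op C N d).
Local Notation vec := (vec C N d).
Local Notation cfg := (cfg N d).
Local Notation pop := (@permop C N d).

Definition idop : op := fun c c' => (c == c')%:R.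
Definition opsub (A B : op) : op := fun c c' => A c c' - B c c'.
Definition opscale (a : C) (A : op) : op := fun c c' => a * A c c'.
Definition zop : op := fun _ _ => 0.

Lemma opappM (A B : op) (v : vec) : opapp (opmul A B) v = opapp A (opapp B v).
Proof.
apply: functional_extensionality => c; rewrite /opapp /opmul.
under eq_bigr do rewrite mulr_suml.
rewrite exchange_big /=; apply: eq_bigr => c1 _.
by rewrite mulr_sumr; apply: eq_bigr => c2 _; rewrite mulrA.
Qed.

Lemma opmulA (A B D : op) : opmul A (opmul B D) = opmul (opmul A B) D.
Proof.
apply: functional_extensionality => c; apply: functional_extensionality => c'.
have := congr1 (fun f => f c) (opappM A B (fun x => D x c')).
by rewrite /opapp /opmul.
Qed.

Lemma opmulBr (A B D : op) : opmul A (opsub B D) = opsub (opmul A B) (opmul A D).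
Proof.
apply: functional_extensionality => c; apply: functional_extensionality => c'.
by rewrite /opmul /opsub -sumrB; apply: eq_bigr => c1 _; rewrite mulrBr.
Qed.

Lemma opmulBl (A B D : op) : opmul (opsub A B) D = opsub (opmul A D) (opmul B D).
Proof.
apply: functional_extensionality => c; apply: functional_extensionality => c'.
by rewrite /opmul /opsub -sumrB; apply: eq_bigr => c1 _; rewrite mulrBl.
Qed.

Lemma opmul1l (A : op) : opmul idop A = A.
Proof.
apply: functional_extensionality => c; apply: functional_extensionality => c'.
rewrite /opmul /idop (bigD1 c) //= eqxx mul1r big1 ?addr0 // => c1.
by rewrite eq_sym => /negbTE ->; rewrite mul0r.
Qed.

Lemma opmul1r (A : op) : opmul A idop = A.
Proof.
apply: functional_extensionality => c; apply: functional_extensionality => c'.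
rewrite /opmul /idop (bigD1 c') //= eqxx mulr1 big1 ?addr0 // => c1.
by move=> /negbTE ->; rewrite mulr0.
Qed.

Lemma opapp1 (v : vec) : opapp idop v = v.
Proof.
apply: functional_extensionality => c.
rewrite /opapp /idop (bigD1 c) //= eqxx mul1r big1 ?addr0 // => c1.
by rewrite eq_sym => /negbTE ->; rewrite mul0r.
Qed.

Lemma opappB (A B : op) (v : vec) (c : cfg) : opapp (opsub A B) v c = opapp A v c - opapp B v c.
Proof. by rewrite /opapp /opsub -sumrB; apply: eq_bigr => c1 _; rewrite mulrBl. Qed.

Lemma opmulZl a (A B : op) : opmul (opscale a A) B = opscale a (opmul A B).
Proof.
apply: functional_extensionality => c; apply: functional_extensionality => c'.
by rewrite /opmul /opscale mulr_sumr; apply: eq_bigr => c1 _; rewrite mulrA.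
Qed.

Lemma opmulZr a (A B : op) : opmul A (opscale a B) = opscale a (opmul A B).
Proof.
apply: functional_extensionality => c; apply: functional_extensionality => c'.
by rewrite /opmul /opscale mulr_sumr; apply: eq_bigr => c1 _; rewrite mulrCA.
Qed.

Lemma permop_app (s : 'S_N) (v : vec) (c : cfg) :
  opapp (permop C s) v c = v [ffun x => c ((s^-1)%g x)].
Proof.
rewrite /opapp /permop (bigD1 [ffun x => c ((s^-1)%g x)]) //=.
have -> : c == [ffun x => [ffun x0 => c ((s^-1)%g x0)] (s x)].
  by apply/eqP/ffunP => x; rewrite !ffunE permK.
rewrite mul1r big1 ?addr0 // => c1 hc1.
case: eqP => [E|]; last by rewrite mul0r.
by case/eqP: hc1; apply/ffunP => x; rewrite E !ffunE permKV.
Qed.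

Lemma permopM (s t : 'S_N) : opmul (pop s) (pop t) = pop (s * t)%g.
Proof.
apply: functional_extensionality => c; apply: functional_extensionality => c'.
have := permop_app s (fun x => pop t x c') c; rewrite /opapp /opmul => ->.
rewrite /permop; congr ((nat_of_bool _)%:R); apply/idP/idP => /eqP E; apply/eqP; apply/ffunP => x.
  by move/ffunP: E => /(_ (s x)); rewrite !ffunE permK permM => <-.
by rewrite !ffunE E ffunE permM permKV.
Qed.

Lemma permop1 : pop 1 = idop.
Proof.
apply: functional_extensionality => c; apply: functional_extensionality => c'.
rewrite /permop /idop; congr ((nat_of_bool _)%:R); congr (c == _); apply/ffunP => x.
by rewrite ffunE perm1.
Qed.

Lemma permop_adj (s : 'S_N) : opadj (pop s) = pop (s^-1)%g.
Proof.
apply: functional_extensionality => c; apply: functional_extensionality => c'.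
rewrite /opadj /permop conjC_nat; congr ((nat_of_bool _)%:R); apply/idP/idP => /eqP E; apply/eqP; apply/ffunP => x.
  by rewrite ffunE E ffunE permKV.
by rewrite E ffunE ffunE permK.
Qed.

End OpAlg.

Section Site.
Variables (C : numClosedFieldType) (N d : nat).
Local Notation op := (op C N d).
Local Notation vec := (vec C N d).
Local Notation cfg := (cfg N d).

Definition agree (x : 'I_N) (c c' : cfg) :=
  [forall z, (z \notin [set x]) ==> (c z == c' z)].
Definition siteop x (M : 'M[C]_d) : op :=
  fun c c' => if agree x c c' then M (c' x) (c x) else 0.
Definition upd (c : cfg) x (j : 'I_d) : cfg := [ffun z => if z == x then j else c z].

Lemma agree_sym x c c' : agree x c c' = agree x c' c.
Proof. by rewrite /agree; apply/forallP/forallP => H z; rewrite eq_sym; apply: H. Qed.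

Lemma agreeE x c c' : agree x c c' = (c' == upd c x (c' x)).
Proof.
rewrite /agree; apply/forallP/eqP => [H|E].
  apply/ffunP => z; rewrite ffunE; case: eqP => [->//|/eqP zx].
  by have := H z; rewrite in_set1 zx /= eq_sym => /eqP.
move=> z; rewrite in_set1; case: eqP => //= /eqP zx.
by rewrite E ffunE (negbTE zx).
Qed.

Lemma upd_at c x j : upd c x j x = j.
Proof. by rewrite ffunE eqxx. Qed.

Lemma upd_agree x c j : agree x c (upd c x j).
Proof. by rewrite agreeE upd_at eqxx. Qed.


Lemma agree_trans x c1 c2 c3 : agree x c1 c2 -> agree x c2 c3 = agree x c1 c3.
Proof.
move=> /forallP H12; apply/forallP/forallP => H z; have := H12 z; have := H z.
  by case: (z \notin _) => //= /eqP <- /eqP ->.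
by case: (z \notin _) => //= /eqP <- /eqP ->.
Qed.

Lemma sum_agree x (c : cfg) (F : cfg -> C) :
  \sum_(c' | agree x c c') F c' = \sum_(j : 'I_d) F (upd c x j).
Proof.
rewrite (reindex_onto (upd c x) (fun c' : cfg => c' x)) /=; last first.
  by move=> c' ; rewrite agreeE => /eqP <-.
by apply: eq_bigl => j; rewrite upd_agree upd_at eqxx.
Qed.

Lemma siteop1 x : siteop x 1%:M = @idop C N d.
Proof.
apply: functional_extensionality => c; apply: functional_extensionality => c'.
rewrite /siteop /idop mxE; case: ifP => A.
  rewrite agreeE in A; congr ((nat_of_bool _)%:R); apply/eqP/eqP => [E|->].
    by rewrite (eqP A) E; apply/ffunP => z; rewrite ffunE; case: eqP => // ->.
  by [].
case: eqP => // E; move: A; rewrite E /agree.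
by move/negP; case; apply/forallP => z; rewrite eqxx implybT.
Qed.

Lemma siteopB x M M' : siteop x (M - M') = opsub (siteop x M) (siteop x M').
Proof.
apply: functional_extensionality => c; apply: functional_extensionality => c'.
by rewrite /siteop /opsub; case: ifP; rewrite ?mxE ?subr0.
Qed.

Lemma siteopM x M M' : opmul (siteop x M) (siteop x M') = siteop x (M' *m M).
Proof.
apply: functional_extensionality => c; apply: functional_extensionality => c''.
rewrite /opmul.
transitivity (\sum_(c' | agree x c'' c') siteop x M c c' * M' (c'' x) (c' x)).
  rewrite [RHS]big_mkcond /=; apply: eq_bigr => c' _; rewrite [siteop x M' _ _]/siteop (agree_sym x c' c'').
  by case: ifP; rewrite ?mulr0.
rewrite sum_agree /siteop.
have E j : agree x c (upd c'' x j) = agree x c c''.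
  by rewrite agree_sym (agree_trans _ (upd_agree x c'' j)) agree_sym.
under eq_bigr do rewrite E upd_at.
case: ifP => _; last by rewrite big1 // => j _; rewrite mul0r.
by rewrite mxE; apply: eq_bigr => j _; rewrite mulrC.
Qed.

Lemma siteop_adj x (M M' : 'M[C]_d) : (forall i j, (M i j)^* = M' j i) ->
  opadj (siteop x M) = siteop x M'.
Proof.
move=> HM; apply: functional_extensionality => c; apply: functional_extensionality => c'.
by rewrite /opadj /siteop agree_sym; case: ifP; rewrite ?HM ?conjC0.
Qed.

Lemma siteop_app x M (v : vec) c :
  opapp (siteop x M) v c = \sum_(j : 'I_d) M j (c x) * v (upd c x j).
Proof.
rewrite /opapp.
transitivity (\sum_(c' | agree x c c') M (c' x) (c x) * v c').
  by rewrite [RHS]big_mkcond /=; apply: eq_bigr => c' _; rewrite /siteop; case: ifP; rewrite ?mul0r.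
by rewrite sum_agree; under eq_bigr do rewrite upd_at.
Qed.

Lemma siteop_acts x M : acts_only_on [set x] (siteop x M).
Proof.
exists (fun c c' => M (c' x) (c x)); split; first by [].
by move=> c1 c1' c2 c2' H; have [-> ->] := H x (set11 x).
Qed.

End Site.

Section Tk.
Variables (C : numClosedFieldType) (N d : nat) (Q : 'M[C]_d).
Local Notation op := (op C N d).
Local Notation vec := (vec C N d).
Local Notation cfg := (cfg N d).

Definition Tk (k : nat) : op := fun c c' =>
  if [forall z : 'I_N, (k <= z)%N ==> (c z == c' z)]
  then \prod_(z : 'I_N | (z < k)%N) Q (c' z) (c z) else 0.

Lemma Tk0 : Tk 0 = @idop C N d.
Proof.
apply: functional_extensionality => c; apply: functional_extensionality => c'.
rewrite /Tk /idop big_pred0 //; case: ifP => H.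
  by move/forallP: H => H; have -> : c == c' by apply/eqP/ffunP => z; apply/eqP/H.
by case: eqP => // E; move/negP: H; case; apply/forallP => z; rewrite E eqxx implybT.
Qed.

Lemma TkN c c' : Tk N c c' = \prod_(z : 'I_N) Q (c' z) (c z).
Proof.
rewrite /Tk; have -> : [forall z : 'I_N, (N <= z)%N ==> (c z == c' z)].
  by apply/forallP => z; rewrite leqNgt ltn_ord.
by apply: eq_bigl => z; rewrite ltn_ord.
Qed.

Lemma TkS k (xk : 'I_N) : nat_of_ord xk = k ->
  opmul (Tk k) (siteop xk Q) = Tk k.+1.
Proof.
move=> Exk; apply: functional_extensionality => c; apply: functional_extensionality => c''.
rewrite /opmul.
transitivity (\sum_(c' | agree xk c'' c') Tk k c c' * Q (c'' xk) (c' xk)).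
  rewrite [RHS]big_mkcond /=; apply: eq_bigr => c' _; rewrite /siteop agree_sym.
  by case: ifP; rewrite ?mulr0.
rewrite sum_agree.
have Hp j : \prod_(z : 'I_N | (z < k)%N) Q (upd c'' xk j z) (c z)
          = \prod_(z : 'I_N | (z < k)%N) Q (c'' z) (c z).
  apply: eq_bigr => z zk; rewrite ffunE; case: eqP => // E.
  by move: zk; rewrite E Exk ltnn.
have Hc j : [forall z : 'I_N, (k <= z)%N ==> (c z == upd c'' xk j z)]
   = (c xk == j) && [forall z : 'I_N, (k.+1 <= z)%N ==> (c z == c'' z)].
  apply/forallP/andP => [H|[/eqP H1 /forallP H2] z].
    split; first by have := H xk; rewrite upd_at Exk leqnn.
    apply/forallP => z; apply/implyP => kz; have := H z.
    rewrite ffunE; case: (z =P xk) => [E|_]; first by move: kz; rewrite E Exk ltnn.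
    by rewrite (ltnW kz).
  rewrite ffunE; case: (z =P xk) => [->|/eqP zx]; first by rewrite H1 eqxx implybT.
  apply/implyP => kz; apply: (implyP (H2 z)).
  rewrite ltn_neqAle kz andbT; apply/eqP => E; move/eqP: zx; apply.
  by apply/val_inj => /=; rewrite -E Exk.
rewrite (bigD1 (c xk)) //= big1 ?addr0; last first.
  by move=> j /negbTE nj; rewrite /Tk Hc eq_sym nj /= mul0r.
rewrite /Tk Hc Hp eqxx /= upd_at.
case: ifP => _; last by rewrite mul0r.
rewrite [in RHS](bigD1 xk) /=; last by rewrite Exk.
rewrite mulrC; congr (_ * _); apply: eq_bigl => z.
by rewrite ltnS -(inj_eq val_inj) /= Exk andbC -ltn_neqAle.
Qed.

End Tk.

Section Tens.
Variables (C : numClosedFieldType) (N d k : nat) (S : 'M[C]_(k, d)).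
Local Notation op := (op C N d).
Local Notation vec := (vec C N d).
Local Notation cfg := (cfg N d).
Local Notation pop := (@permop C N d).
Local Notation IT := (@in_tensor C N d k S).

Lemma it0 : IT (fun _ => 0).
Proof.
exists 0%N, (fun _ _ => 0); split; first by move=> *; apply: sub0mx.
by apply: functional_extensionality => c; rewrite big_ord0.
Qed.

Lemma itD v1 v2 : IT v1 -> IT v2 -> IT (fun c => v1 c + v2 c).
Proof.
move=> [m1 [u1 [H1 ->]]] [m2 [u2 [H2 ->]]].
exists (m1 + m2)%N, (fun i => match split i with inl a => u1 a | inr b => u2 b end).
split; first by move=> i x; case: (split i).
apply: functional_extensionality => c; rewrite big_split_ord /=.
congr (_ + _); apply: eq_bigr => i _.
  by rewrite (unsplitK (inl _ i)).
by rewrite (unsplitK (inr _ i)).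
Qed.

Lemma itZ (x0 : 'I_N) a v : IT v -> IT (fun c => a * v c).
Proof.
move=> [m [u [Hu ->]]].
exists m, (fun i x => if x == x0 then a *: u i x else u i x); split.
  by move=> i x; case: eqP => _; rewrite ?scalemx_sub.
apply: functional_extensionality => c; rewrite mulr_sumr; apply: eq_bigr => i _.
rewrite (bigD1 x0) //= [in RHS](bigD1 x0) //= eqxx mxE mulrA; congr (_ * _).
by apply: eq_bigr => x /negbTE ->.
Qed.

Lemma it_sum (I : Type) (r : seq I) (F : I -> vec) :
  (forall i, IT (F i)) -> IT (fun c => \sum_(i <- r) F i c).
Proof.
move=> HF; elim: r => [|i r IH].
  have -> : (fun c : cfg => \sum_(i <- [::]) F i c) = (fun _ => 0).
    by apply: functional_extensionality => c; rewrite big_nil.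
  exact: it0.
have -> : (fun c : cfg => \sum_(j <- i :: r) F j c) = (fun c => F i c + \sum_(j <- r) F j c).
  by apply: functional_extensionality => c; rewrite big_cons.
by apply: itD.
Qed.

Lemma it_prod (u : 'I_N -> 'rV[C]_d) : (forall x, (u x <= S)%MS) ->
  IT (fun c => \prod_x u x 0 (c x)).
Proof.
move=> Hu; exists 1%N, (fun _ => u); split=> //.
by apply: functional_extensionality => c; rewrite big_ord1.
Qed.

Lemma it_perm (s : 'S_N) v : IT v -> IT (opapp (pop s) v).
Proof.
move=> [m [u [Hu ->]]].
exists m, (fun i y => u i (s y)); split=> //.
apply: functional_extensionality => c; rewrite permop_app; apply: eq_bigr => i _.
rewrite (reindex_inj (@perm_inj _ s)) /=; apply: eq_bigr => y _.
by rewrite ffunE permK.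
Qed.

Local Notation Q := (Qp S).

Lemma it_T (x0 : 'I_N) (y : vec) : IT (opapp (Tk Q N) y).
Proof.
have -> : opapp (Tk Q N) y = fun c => \sum_(c' : cfg) y c' * \prod_x (row (c' x) Q) 0 (c x).
  apply: functional_extensionality => c; rewrite /opapp; apply: eq_bigr => c' _.
  by rewrite TkN mulrC; apply: congr1; apply: eq_bigr => x _; rewrite [RHS]mxE.
apply: it_sum => c'; apply: (itZ x0); apply: it_prod => x; exact: Qp_row.
Qed.

Lemma site_fix x v : IT v -> opapp (siteop x Q) v = v.
Proof.
move=> [m [u [Hu ->]]]; apply: functional_extensionality => c.
rewrite siteop_app.
under eq_bigr do rewrite mulr_sumr.
rewrite exchange_big /=; apply: eq_bigr => i _.
transitivity (\sum_(j < d) (u i x 0 j * Q j (c x)) * \prod_(z | z != x) u i z 0 (c z)).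
  apply: eq_bigr => j _; rewrite (bigD1 x) //= upd_at mulrA [Q _ _ * _]mulrC.
  by congr (_ * _); apply: eq_bigr => z /negbTE zx; rewrite ffunE zx.
rewrite -mulr_suml [RHS](bigD1 x) //=; congr (_ * _).
by rewrite -[in RHS](Qp_id (Hu i x)) [RHS]mxE.
Qed.

Lemma T_fix kk v : (kk <= N)%N -> IT v -> opapp (Tk Q kk) v = v.
Proof.
move=> + Hv; elim: kk => [|kk IH] Hk; first by rewrite Tk0 opapp1.
rewrite -(TkS Q (xk := Ordinal Hk)) // opappM site_fix // IH //.
exact: ltnW.
Qed.

End Tens.

Section Sym.
Variables (C : numClosedFieldType) (N d : nat).
Local Notation op := (op C N d).
Local Notation vec := (vec C N d).
Local Notation cfg := (cfg N d).
Local Notation pop := (@permop C N d).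

Definition Aop : op := fun c c' => (N`!%:R)^-1 * \sum_(t : 'S_N) pop t c c'.

Lemma opmul_sum (I : Type) (r : seq I) (P : pred I) (F : I -> op) (Y : op) c c' :
  opmul Y (fun a b => \sum_(i <- r | P i) F i a b) c c' = \sum_(i <- r | P i) opmul Y (F i) c c'.
Proof.
rewrite /opmul; under eq_bigr do rewrite mulr_sumr.
by rewrite exchange_big.
Qed.

Lemma opmul_suml (I : Type) (r : seq I) (P : pred I) (F : I -> op) (Y : op) c c' :
  opmul (fun a b => \sum_(i <- r | P i) F i a b) Y c c' = \sum_(i <- r | P i) opmul (F i) Y c c'.
Proof.
rewrite /opmul; under eq_bigr do rewrite mulr_suml.
by rewrite exchange_big.
Qed.

Lemma popA_l (s : 'S_N) : opmul (pop s) Aop = Aop.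
Proof.
apply: functional_extensionality => c; apply: functional_extensionality => c'.
rewrite /Aop /opmul; under eq_bigr do rewrite mulrCA.
rewrite -mulr_sumr; congr (_ * _).
transitivity (opmul (pop s) (fun a b => \sum_(t : 'S_N) pop t a b) c c') => //.
rewrite opmul_sum.
under eq_bigr do rewrite permopM.
by rewrite [RHS](reindex_inj (mulgI s)).
Qed.

Lemma popA_r (s : 'S_N) : opmul Aop (pop s) = Aop.
Proof.
apply: functional_extensionality => c; apply: functional_extensionality => c'.
rewrite /Aop /opmul; under eq_bigr do rewrite -mulrA.
rewrite -mulr_sumr; congr (_ * _).
transitivity (opmul (fun a b => \sum_(t : 'S_N) pop t a b) (pop s) c c') => //.
rewrite opmul_suml.
under eq_bigr do rewrite permopM.
by rewrite [RHS](reindex_inj (mulIg s)).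
Qed.

Lemma cardSN : #|(xpredT : pred 'S_N)| = N`!.
Proof. exact: card_Sn. Qed.

Lemma Nfact_neq0 : (N`!%:R : C) != 0.
Proof. by rewrite pnatr_eq0 -lt0n fact_gt0. Qed.

Lemma Aop_fix (v : vec) : (forall s : 'S_N, opapp (pop s) v = v) -> opapp Aop v = v.
Proof.
move=> Hv; apply: functional_extensionality => c.
rewrite /opapp /Aop; under eq_bigr do rewrite -mulrA mulr_suml.
rewrite -mulr_sumr exchange_big /=.
have E t : \sum_(c' : cfg) pop t c c' * v c' = v c by rewrite -[RHS](congr1 (fun f => f c) (Hv t)).
under eq_bigr do rewrite E.
by rewrite sumr_const cardSN -[v c *+ _]mulr_natl mulrA mulVf ?mul1r // Nfact_neq0.
Qed.

Lemma Aop_sym (s : 'S_N) (v : vec) : opapp (pop s) (opapp Aop v) = opapp Aop v.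
Proof. by rewrite -opappM popA_l. Qed.

Lemma idop_sub_Aop c c' : opsub (@idop C N d) Aop c c' =
  (N`!%:R)^-1 * \sum_(t : 'S_N) opsub (@idop C N d) (pop t) c c'.
Proof.
rewrite /opsub /Aop sumrB sumr_const cardSN mulrBr -[(idop _ _ _) *+ _]mulr_natl mulrA mulVf ?mul1r //.
exact: Nfact_neq0.
Qed.

Lemma it_Aop k (S : 'M[C]_(k, d)) (x0 : 'I_N) (v : vec) :
  in_tensor S v -> in_tensor S (opapp Aop v).
Proof.
move=> Hv.
have -> : opapp Aop v = fun c => (N`!%:R)^-1 * \sum_(t : 'S_N) opapp (pop t) v c.
  apply: functional_extensionality => c; rewrite /opapp /Aop.
  under eq_bigr do rewrite -mulrA mulr_suml.
  by rewrite -mulr_sumr exchange_big.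
apply: (itZ x0); apply: it_sum => t; exact: it_perm.
Qed.

End Sym.

Section Ideal.
Variables (C : numClosedFieldType) (N d k : nat) (S : 'M[C]_(k, d)) (e : rel 'I_N).
Local Notation op := (op C N d).
Local Notation vec := (vec C N d).
Local Notation cfg := (cfg N d).
Local Notation pop := (@permop C N d).
Local Notation id1 := (@idop C N d).

Definition P1 x : op := siteop x (1%:M - Qp S).
Definition P2 (x y : 'I_N) : op := fun c c' => 2^-1 * opsub id1 (pop (tperm x y)) c c'.

Definition inL (X : op) := exists (h1 : 'I_N -> op) (h2 : 'I_N -> 'I_N -> op),
  forall c c', X c c' =
          \sum_(x : 'I_N) opmul (h1 x) (P1 x) c c'
          + \sum_(x : 'I_N) \sum_(y : 'I_N | (x < y)%N && e x y)
              opmul (h2 x y) (P2 x y) c c'.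

Lemma inL_ext X Y : (forall c c', X c c' = Y c c') -> inL X -> inL Y.
Proof. by move=> E [h1 [h2 H]]; exists h1, h2 => c c'; rewrite -E H. Qed.

Lemma opmul0l (P : op) c c' : opmul (fun _ _ => 0) P c c' = 0.
Proof. by rewrite /opmul big1 // => *; rewrite mul0r. Qed.

Lemma opmulDl' (A B P : op) c c' :
  opmul (opadd A B) P c c' = opmul A P c c' + opmul B P c c'.
Proof. by rewrite /opmul -big_split; apply: eq_bigr => *; rewrite mulrDl. Qed.

Lemma opmulDr' (A B P : op) c c' :
  opmul P (opadd A B) c c' = opmul P A c c' + opmul P B c c'.
Proof. by rewrite /opmul -big_split; apply: eq_bigr => *; rewrite mulrDr. Qed.

Lemma inL0 : inL (fun _ _ => 0).
Proof.
exists (fun _ _ _ => 0), (fun _ _ _ _ => 0) => c c'.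
by rewrite !big1 ?addr0 // => x _; rewrite ?big1 // => *; rewrite opmul0l.
Qed.

Lemma inLD X Y : inL X -> inL Y -> inL (opadd X Y).
Proof.
move=> [h1 [h2 H]] [g1 [g2 G]].
exists (fun x => opadd (h1 x) (g1 x)), (fun x y => opadd (h2 x y) (g2 x y)) => c c'.
rewrite /opadd H G.
under [X in _ = X + _]eq_bigr do rewrite opmulDl'.
under [X in _ = _ + X]eq_bigr do under eq_bigr do rewrite opmulDl'.
under [X in _ = _ + X]eq_bigr do rewrite big_split /=.
rewrite !big_split /=.
by rewrite -!addrA; congr (_ + _); rewrite addrC -!addrA; congr (_ + _); rewrite addrC.
Qed.

Lemma inLM Y X : inL X -> inL (opmul Y X).
Proof.
move=> [h1 [h2 H]].
exists (fun x => opmul Y (h1 x)), (fun x y => opmul Y (h2 x y)) => c c'.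
have -> : X = opadd (fun a b => \sum_(x : 'I_N) opmul (h1 x) (P1 x) a b)
   (fun a b => \sum_(x : 'I_N) \sum_(y : 'I_N | (x < y)%N && e x y) opmul (h2 x y) (P2 x y) a b).
  by apply: functional_extensionality => a; apply: functional_extensionality => b; rewrite H.
rewrite opmulDr' !opmul_sum; congr (_ + _).
  by apply: eq_bigr => x _; rewrite opmulA.
apply: eq_bigr => x _; rewrite opmul_sum; apply: eq_bigr => y _; by rewrite opmulA.
Qed.

Lemma inLZ a X : inL X -> inL (opscale a X).
Proof.
move=> HX; have := inLM (opscale a id1) HX.
by rewrite opmulZl opmul1l.
Qed.

Lemma inL_sum (I : Type) (r : seq I) (F : I -> op) :
  (forall i, inL (F i)) -> inL (fun c c' => \sum_(i <- r) F i c c').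
Proof.
move=> HF; elim: r => [|i r IH].
  by apply: inL_ext inL0 => c c'; rewrite big_nil.
by apply: inL_ext (inLD (HF i) IH) => c c'; rewrite big_cons.
Qed.

Lemma inL_P1 Y x : inL (opmul Y (P1 x)).
Proof.
exists (fun z => if z == x then Y else (fun _ _ => 0)), (fun _ _ _ _ => 0) => c c'.
rewrite [X in _ = _ + X]big1 ?addr0; last by move=> *; rewrite big1 // => *; rewrite opmul0l.
rewrite (bigD1 x) //= eqxx big1 ?addr0 // => z /negbTE ->; exact: opmul0l.
Qed.

Lemma P2C x y : P2 x y = P2 y x.
Proof. by rewrite /P2 tpermC. Qed.

Lemma inL_P2 Y x y : symmetric e -> irreflexive e -> e x y -> inL (opmul Y (P2 x y)).
Proof.
move=> esym eirr.
wlog xy : x y / (x < y)%N.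
  move=> W exy; case: (ltngtP x y) => [/W|/W|/val_inj E]; first exact.
    by rewrite P2C; apply; rewrite esym.
  by move: exy; rewrite E eirr.
move=> exy.
exists (fun _ _ _ => 0), (fun a b => if (a == x) && (b == y) then Y else (fun _ _ => 0)) => c c'.
rewrite big1 ?add0r; last by move=> *; exact: opmul0l.
rewrite (bigD1 x) //= [X in _ = _ + X]big1 ?addr0; last first.
  move=> a /negbTE ax; rewrite big1 // => b _; rewrite ax; exact: opmul0l.
rewrite (bigD1 y) /=; last by rewrite xy exy.
rewrite !eqxx /= big1 ?addr0 // => b /andP [_ /negbTE ->]; exact: opmul0l.
Qed.

Lemma inL_permM (s t : 'S_N) : inL (opsub id1 (pop s)) -> inL (opsub id1 (pop t)) ->
  inL (opsub id1 (pop (s * t)%g)).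
Proof.
move=> Hs Ht; have := inLD Hs (inLM (pop s) Ht).
apply: inL_ext => c c'.
by rewrite /opadd opmulBr opmul1r permopM /opsub addrA subrK.
Qed.

Lemma inL_perm1 : inL (opsub id1 (pop 1%g)).
Proof. by apply: inL_ext inL0 => c c'; rewrite permop1 /opsub subrr. Qed.

Lemma two_neq0 : (2 : C) != 0.
Proof. by rewrite pnatr_eq0. Qed.

Lemma inL_edge x y : symmetric e -> irreflexive e -> e x y ->
  inL (opsub id1 (pop (tperm x y))).
Proof.
move=> esym eirr exy; have := inL_P2 (opscale 2 id1) esym eirr exy.
apply: inL_ext => c c'.
by rewrite opmulZl opmul1l /opscale /P2 mulrA mulfV ?mul1r // two_neq0.
Qed.

Lemma inL_all (s : 'S_N) : symmetric e -> irreflexive e -> (forall x y, connect e x y) ->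
  inL (opsub id1 (pop s)).
Proof.
move=> esym eirr econ.
have step a b0 b1 : e b0 b1 -> inL (opsub id1 (pop (tperm a b0))) ->
    inL (opsub id1 (pop (tperm a b1))).
  move=> e01 H0.
  have [->|nb1] := eqVneq b1 a; first by rewrite tperm1; exact: inL_perm1.
  have [E0|nb0] := eqVneq b0 a; first by rewrite -E0; exact: inL_edge.
  have n01 : b0 != b1 by apply/eqP => E; move: e01; rewrite E eirr.
  have -> : tperm a b1 = ((tperm b0 b1)^-1 * tperm a b0 * tperm b0 b1)%g.
    by rewrite -mulgA -conjgE tpermJ tpermL tpermD.
  rewrite tpermV; apply: inL_permM; first apply: inL_permM => //.
    exact: inL_edge.
  exact: inL_edge.
have Ht a b : inL (opsub id1 (pop (tperm a b))).
  have [p pth ->] := connectP (econ a b).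
  have : inL (opsub id1 (pop (tperm a a))) by rewrite tperm1; exact: inL_perm1.
  elim: p {1 3 5}a pth => [|b1 p IH] b0 /=; first by move=> _.
  move=> /andP [e01 pth] H0.
  exact: (IH b1 pth (step _ _ _ e01 H0)).
have [ts -> _] := prod_tpermP s.
elim: ts => [|t ts IH]; first by rewrite big_nil; exact: inL_perm1.
by rewrite big_cons; apply: inL_permM.
Qed.

End Ideal.

Section Proj2.
Variables (C : numClosedFieldType) (N d k : nat) (S : 'M[C]_(k, d)).
Local Notation op := (op C N d).
Local Notation vec := (vec C N d).
Local Notation cfg := (cfg N d).
Local Notation pop := (@permop C N d).
Local Notation id1 := (@idop C N d).
Local Notation Q := (Qp S).

Lemma P1E (x : 'I_N) : P1 S x = opsub id1 (siteop x Q).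
Proof. by rewrite /P1 siteopB siteop1. Qed.

Lemma P1_orth (x : 'I_N) : orth_proj (P1 S x).
Proof.
split.
  rewrite /P1 siteopM; congr siteop.
  by rewrite mulmxBl mul1mx mulmxBr mulmx1 Qp_idem subrr subr0.
rewrite /P1; apply: siteop_adj => i j.
by rewrite [((1%:M - Q) : 'M_d) i j]mxE [((1%:M - Q) : 'M_d) j i]mxE [(1%:M : 'M_d) i j]mxE [(1%:M : 'M_d) j i]mxE [(- Q) i j]mxE [(- Q) j i]mxE rmorphD rmorphN /= conjC_nat Qp_herm eq_sym.
Qed.

Lemma P1_ann (x : 'I_N) : annihilates S (P1 S x).
Proof.
move=> v [Hv _]; apply: functional_extensionality => c.
by rewrite P1E opappB opapp1 site_fix // subrr.
Qed.

Lemma P2_orth (x y : 'I_N) : orth_proj (@P2 C N d x y).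
Proof.
have E : @P2 C N d x y = opscale 2^-1 (opsub id1 (pop (tperm x y))) by [].
split.
  rewrite E opmulZl opmulZr opmulBl opmulBr opmulBr !opmul1l opmul1r permopM tperm2 permop1.
  apply: functional_extensionality => c; apply: functional_extensionality => c'.
  rewrite /opscale /opsub.
  by field.
rewrite E; apply: functional_extensionality => c; apply: functional_extensionality => c'.
have := congr1 (fun f => f c c') (@permop_adj C N d (tperm x y)).
rewrite /opadj /opscale /opsub tpermV => <-.
by rewrite rmorphM rmorphB /= fmorphV /= conjC_nat /idop conjC_nat eq_sym.
Qed.

Lemma P2_ann (x y : 'I_N) : annihilates S (@P2 C N d x y).
Proof.
move=> v [_ Hv]; apply: functional_extensionality => c.
rewrite /opapp /P2.
under eq_bigr do rewrite -mulrA.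
rewrite -mulr_sumr.
have := opappB id1 (pop (tperm x y)) v c; rewrite /opapp => ->.
have := congr1 (fun f => f c) (Hv (tperm x y)); rewrite /opapp => ->.
have := congr1 (fun f => f c) (opapp1 v); rewrite /opapp => ->.
by rewrite subrr mulr0.
Qed.

Lemma P2_acts (x y : 'I_N) : x != y -> acts_only_on [set x; y] (@P2 C N d x y).
Proof.
move=> nxy.
exists (fun c c' => 2^-1 * (((c x == c' x) && (c y == c' y))%:R
                          - ((c x == c' y) && (c y == c' x))%:R)); split; last first.
  by move=> c1 c1' c2 c2' H; have [-> ->] := H x (set21 x y); have [-> ->] := H y (set22 x y).
move=> c c'; rewrite /P2 /opsub /idop /permop.
case: ifP => [/forallP H|/negbT H].
  congr (_ * (_ - _)); congr ((nat_of_bool _)%:R).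
    apply/eqP/andP => [->|[/eqP E1 /eqP E2]]; first by rewrite !eqxx.
    apply/ffunP => z; have := H z; rewrite !inE; case: eqP => [->//|_]; case: eqP => [->//|_].
    by move=> /= /eqP.
  apply/eqP/andP => [->|[/eqP E1 /eqP E2]]; first by rewrite !ffunE tpermL tpermR !eqxx.
  apply/ffunP => z; rewrite ffunE; have := H z; rewrite !inE.
  case: eqP => [->|/eqP zx]; first by rewrite tpermL.
  case: eqP => [->|/eqP zy]; first by rewrite tpermR.
  by rewrite tpermD 1?eq_sym // => /= /eqP.
move: H; rewrite negb_forall => /existsP [z]; rewrite negb_imply => /andP [zn nz].
move: zn; rewrite !inE negb_or => /andP [zx zy].
have -> : (c == c') = false by apply/negbTE; apply: contra nz => /eqP ->.
have -> : (c == [ffun z0 => c' (tperm x y z0)]) = false.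
  apply/negbTE; apply: contra nz => /eqP ->; rewrite ffunE tpermD // eq_sym //.
by rewrite subrr mulr0.
Qed.

End Proj2.

Lemma inL_T (C : numClosedFieldType) (N d k : nat) (S : 'M[C]_(k, d)) (e : rel 'I_N) kk :
  (kk <= N)%N -> inL S e (opsub (@idop C N d) (Tk (Qp S) kk)).
Proof.
elim: kk => [|kk IH] Hk.
  by rewrite Tk0; apply: inL_ext (inL0 S e) => c c'; rewrite /opsub subrr.
have := inLD (IH (ltnW Hk)) (inL_P1 S e (Tk (Qp S) kk) (Ordinal Hk)).
apply: inL_ext => c c'.
rewrite P1E opmulBr opmul1r (TkS _ (xk := Ordinal Hk)) //.
by rewrite /opadd /opsub addrA subrK.
Qed.

Unset Implicit Arguments.

Theorem corollary5p1 (C : numClosedFieldType) (N d k : nat) (e : rel 'I_N)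
  (S : 'M[C]_(k, d)) (H : op C N d) :
  connected_graph e ->
  (forall v, in_sym S v -> in_sym S (opapp H v)) ->
  exists (HA HZ : op C N d),
    H = opadd HA HZ /\
    (forall s : 'S_N,
       opmul (permop C s) (opmul HZ (permop C s^-1)) = HZ) /\
    annihilates S HA /\
    (exists (h1 P1 : 'I_N -> op C N d) (h2 P2 : 'I_N -> 'I_N -> op C N d),
       (forall x, orth_proj (P1 x) /\ acts_only_on [set x] (P1 x)
                  /\ annihilates S (P1 x)) /\
       (forall x y, e x y ->
          orth_proj (P2 x y) /\ acts_only_on [set x; y] (P2 x y)
          /\ annihilates S (P2 x y)) /\
       (forall c c', HA c c' =
          \sum_(x : 'I_N) opmul (h1 x) (P1 x) c c'
          + \sum_(x : 'I_N) \sum_(y : 'I_N | (x < y)%N && e x y)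
              opmul (h2 x y) (P2 x y) c c')) /\
    (forall v (lam : C), in_sym S v ->
       opapp HZ v = (fun c => lam * v c) ->
       opapp H v = (fun c => lam * v c)).
Proof.
move=> [esym [eirr econ]] Hinv.
pose id1 := @idop C N d.
pose A := @Aop C N d.
pose T : op C N d := Tk (Qp S) N.
pose Pi := opmul A (opmul T A).
pose HZ := opmul H Pi.
pose HA := opsub H HZ.
have PiFix v : in_sym S v -> opapp Pi v = v.
  move=> [Hv Hs]; rewrite !opappM Aop_fix // T_fix // Aop_fix //.
have HZv v : in_sym S v -> opapp HZ v = opapp H v.
  by move=> Hv; rewrite opappM PiFix.
exists HA, HZ; split.
  apply: functional_extensionality => c; apply: functional_extensionality => c'.
  by rewrite /opadd /HA /opsub subrK.
split.
  move=> s.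
  have -> : opmul HZ (permop C s^-1) = HZ by rewrite /HZ /Pi -!opmulA popA_r.
  apply: functional_extensionality => c; apply: functional_extensionality => c''.
  pose y := opapp T (fun c3 => A c3 c'').
  have col : (fun c1 => HZ c1 c'') = opapp H (opapp A y) by [].
  change (opapp (permop C s) (fun c1 => HZ c1 c'') c = HZ c c'').
  rewrite col.
  have [N0|Npos] := posnP N.
    rewrite permop_app; congr opapp; apply/ffunP => x.
    by exfalso; move: (ltn_ord x); move: (nat_of_ord x) => n; rewrite N0.
  have x0 : 'I_N := Ordinal Npos.
  have Hsym : in_sym S (opapp A y).
    split; first by apply: (it_Aop x0); apply: it_T.
    by move=> t; rewrite Aop_sym.
  by have [_ ->] := Hinv _ Hsym.
split.
  move=> v Hv; apply: functional_extensionality => c.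
  by rewrite /HA opappB HZv // subrr.
split.
  have HAL : inL S e HA.
    have -> : HA = opmul H (opsub id1 Pi).
      by rewrite opmulBr opmul1r.
    apply: inLM.
    have E : opsub id1 Pi = opadd (opsub id1 A)
        (opadd (opmul A (opsub id1 T)) (opmul (opmul A T) (opsub id1 A))).
      apply: functional_extensionality => c; apply: functional_extensionality => c'.
      rewrite !opmulBr !opmul1r /Pi opmulA /opadd /opsub.
      by rewrite !addrA !subrK.
    rewrite E; apply: inLD; last apply: inLD.
    - apply: inL_ext (inLZ (N`!%:R)^-1 (inL_sum (index_enum _) (fun t => inL_all S t esym eirr econ))).
      by move=> c c'; rewrite idop_sub_Aop.
    - by apply: inLM; apply: inL_T.
    - apply: inLM.
      apply: inL_ext (inLZ (N`!%:R)^-1 (inL_sum (index_enum _) (fun t => inL_all S t esym eirr econ))).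
      by move=> c c'; rewrite idop_sub_Aop.
  have [h1 [h2 Hh]] := HAL.
  exists h1, (P1 S), h2, (@P2 C N d); split.
    by move=> x; split; [exact: P1_orth | split; [exact: siteop_acts | exact: P1_ann]].
  split; last exact: Hh.
  move=> x y exy; split; first exact: P2_orth.
  split; last exact: P2_ann.
  by apply: P2_acts; apply/eqP => E; move: exy; rewrite E eirr.
move=> v lam Hv Hev.
by rewrite -HZv.
Qed.
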